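(* Let $k\ge 4$, $n=2k-1$, $\lambda\in\overline{\mathcal{U}}_{T_n}$, and let $Y=\mathrm{KN}(S_\lambda)$. Write the elements of $S_\lambda$ increasingly as $0=s_0<s_1<\cdots$ and let $z$ be the index with $s_z=n-2$. Then: (1) the cell in row $z+1$ and column $z+1$ does not belong to $Y$; (2) column $z+1$ of $Y$ contains exactly $z$ cells; (3) the main diagonal of $Y$ contains exactly $z$ cells.
   Context: A partition of $N$ into distinct parts is a sequence $\lambda=(\lambda_1<\dots<\lambda_t)$ of positive integers with sum $N$ and $t\ge 2$, identified with its set of parts. Missing parts: $\mathcal{M}_\lambda=\{1,\dots,\lambda_t\}\setminus\lambda$. $\lambda$ is refinable if two distinct missing parts sum to a part of $\lambda$, unrefinable otherwise; $\mathcal{U}_N$ is the set of unrefinable partitions of $N$. An element of $\mathcal{U}_N$ is maximal if its largest part is the maximum of the largest parts of elements of $\mathcal{U}_N$; $\widetilde{\mathcal{U}}_N$ is the set of these and $\overline{\mathcal{U}}_N=\{\lambda\in\widetilde{\mathcal{U}}_N:\#\mathcal{M}_\lambda=\lfloor\lambda_t/2\rfloor\}$. $T_n=n(n+1)/2$. For $\lambda\in\overline{\mathcal{U}}_{T_n}$ (with $n=2k-1$, $k\ge 4$) one knows $\lambda_t=2n-4$, $t=n-2$ and $n-2\notin\lambda$. $S_\lambda=\mathbb{N}_0\setminus\lambda$. The Keith–Nath transformation sends a set $S\subseteq\mathbb{N}_0$ with $0\in S$ and finite complement to the Young diagram $\mathrm{KN}(S)$ whose boundary is the lattice path that, starting at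 the origin, takes for $j=0,1,\dots,\max(\mathbb{N}_0\setminus S)$ an east step if $j\in S$ and a north step otherwise. Diagrams are in English convention (rows numbered from the top, columns from the left); the main diagonal consists of the cells in row $i$, column $i$. *)

(* Defs.v *)
From mathcomp Require Import all_boot.
Set Implicit Arguments. Unset Strict Implicit. Unset Printing Implicit Defensive.

Definition T (n : nat) : nat := (n * n.+1) %/ 2.

(* A partition into distinct parts is represented by the strictly increasing
   list of its parts [:: l_1; ...; l_t] (identified with its set of parts). *)
Definition is_dpart (N : nat) (lam : seq nat) : bool :=
  [&& sorted ltn lam, all (fun x => 0 < x) lam, sumn lam == N & 2 <= size lam].

Definition largest (lam : seq nat) : nat := last 0 lam.

Definition missing (lam : seq nat) : seq nat :=
  [seq m <- iota 1 (largest lam) | m \notin lam].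

Definition refinable (lam : seq nat) : bool :=
  has (fun a => has (fun b => (a != b) && (a + b \in lam)) (missing lam))
      (missing lam).

Definition unrefinable (N : nat) (lam : seq nat) : bool :=
  is_dpart N lam && ~~ refinable lam.

Definition maximalU (N : nat) (lam : seq nat) : Prop :=
  unrefinable N lam /\ forall mu, unrefinable N mu -> largest mu <= largest lam.

Definition overlineU (N : nat) (lam : seq nat) : Prop :=
  maximalU N lam /\ size (missing lam) = (largest lam)./2.

(* S_lam = N_0 \ lam, enumerated increasingly: S_enum lam i = s_i.
   (The filtered list contains at least i+1 elements since every
   j > max lam lies in S_lam.) *)
Definition S_enum (lam : seq nat) (i : nat) : nat :=
  nth 0 [seq j <- iota 0 ((\max_(g <- lam) g) + i + 1) | j \notin lam] i.

(* Keith--Nath transformation of the set S = N_0 \ G (G finite, 0 \notin G),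
   given by the finite complement G.  Steps j = 0..max G: east (true) if
   j \in S, north (false) otherwise. *)
Definition KN_steps (G : seq nat) : seq bool :=
  [seq j \notin G | j <- iota 0 (\max_(g <- G) g).+1].

(* number of north steps = number of rows of the diagram *)
Definition KN_height (G : seq nat) : nat := count negb (KN_steps G).

(* English convention: cell in row i (from the top, 1-indexed) and column c
   (from the left, 1-indexed) is the unit square [c-1,c] x [h-i, h-i+1]
   (h = height); it lies in the diagram iff the north step of the path
   going from height h-i to h-i+1 has x-coordinate (number of preceding
   east steps) at least c. *)
Definition KN_cell (G : seq nat) (i c : nat) : bool :=
  let st := KN_steps G in
  let h := KN_height G in
  [&& 1 <= i <= h, 1 <= c &
   has (fun p => [&& ~~ nth true st p,
                     count negb (take p st) == h - i &
                     c <= count id (take p st)])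
       (iota 0 (size st))].

Definition KN_col_count (G : seq nat) (c : nat) : nat :=
  count (fun i => KN_cell G i c) (iota 1 (KN_height G)).

Definition KN_diag_count (G : seq nat) : nat :=
  count (fun i => KN_cell G i i) (iota 1 (KN_height G)).

(* Main.v *)
Require Import Defs.
From mathcomp Require Import all_boot.
From mathcomp Require Import zify.

Lemma count_iota_lt (s : seq nat) m : uniq s ->
  count (fun x => x \in s) (iota 0 m) = count (fun x => x < m) s.
Proof.
move=> us; rewrite -!size_filter; apply: perm_size; apply: uniq_perm.
- exact: filter_uniq (iota_uniq _ _).
- exact: filter_uniq.
move=> x; rewrite !mem_filter mem_iota add0n /=.
by case: (x \in s); case: (x < m).
Qed.

Lemma path_last (x0 : nat) s : path ltn x0 s -> forall y, y \in x0 :: s -> y <= last x0 s.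
Proof.
elim: s x0 => [|x s IH] x0 /=.
  by move=> _ y; rewrite inE => /eqP->.
case/andP=> h1 h2 y; rewrite inE => /orP[/eqP->|Hy].
  apply: leq_trans (ltnW h1) _; apply: IH => //; exact: mem_head.
exact: IH.
Qed.

Lemma sorted_last s y : sorted ltn s -> y \in s -> y <= last 0 s.
Proof. case: s => //= x s Hs Hy; exact: path_last. Qed.

Lemma last_in s : 0 < size s -> last 0 s \in s.
Proof. case: s => //= x s _; exact: mem_last. Qed.

Lemma le_bigmax (s : seq nat) x : x \in s -> x <= \max_(g <- s) g.
Proof.
elim: s => // y s IH; rewrite inE big_cons => /orP[/eqP->|H].
  exact: leq_maxl.
apply: leq_trans (IH H) _; exact: leq_maxr.
Qed.

Lemma rank_nth s j : sorted ltn s -> j < size s ->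
  count (fun x => x < nth 0 s j) s = j.
Proof.
elim: s j => // x s IH j /= Hp.
have Hall := order_path_min ltn_trans Hp.
have Hs := path_sorted Hp.
case: j => [|j] /= Hj.
  rewrite ltnn add0n; apply/eqP; rewrite eqn0Ngt -has_count; apply/hasPn => y Hy.
  by rewrite -leqNgt ltnW //; exact: (allP Hall).
have Hn : x < nth 0 s j by apply: (allP Hall); apply: mem_nth.
by rewrite Hn IH.
Qed.

Lemma structure lam :
  sorted ltn lam -> all (fun x => 0 < x) lam -> 0 < size lam ->
  ~~ refinable lam -> size (missing lam) = (largest lam)./2 ->
  let L := largest lam in let h := (L.-1)./2 in
  [/\ size lam = h.+1,
      sumn lam = L + \sum_(a <- iota 1 h) (if a \in lam then a else L - a),
      ~~ odd L -> L./2 \notin lam ,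
      L \in lam & forall x, x \in lam -> 0 < x <= L].
Proof.
move=> Hs Hp Hsz Hun Hm L h.
have Hu : uniq lam := sorted_uniq ltn_trans ltnn Hs.
have HL : L \in lam := @last_in lam Hsz.
have Hle : forall x, x \in lam -> 0 < x <= L.
  by move=> x Hx; rewrite (allP Hp) //= sorted_last.
have L1 : 0 < L by case/andP: (Hle _ HL).
have Hperm1 : perm_eq lam [seq x <- iota 1 L | x \in lam].
  apply: uniq_perm => //; first exact: filter_uniq (iota_uniq _ _).
  move=> x; rewrite mem_filter mem_iota; case Hx: (x \in lam) => //=.
  by move: (Hle _ Hx); lia.
have Hsl : size lam = count (fun x => x \in lam) (iota 1 L).
  by rewrite (perm_size Hperm1) size_filter.
have Hsm : size (missing lam) = L - size lam.
  rewrite Hsl /missing size_filter -/L.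
  have E := count_predC (fun x => x \in lam) (iota 1 L); rewrite size_iota in E.
  have E2 : count (fun m => m \notin lam) (iota 1 L) = count (predC (fun x => x \in lam)) (iota 1 L) by apply: eq_count.
  by rewrite E2 -[X in X - _]E addKn.
have Hsize : size lam = h.+1.
  move: Hm; rewrite Hsm -/L /h; have : size lam <= L.
    by rewrite Hsl; apply: leq_trans (count_size _ _) _; rewrite size_iota.
  lia.
set P := [seq x <- iota 1 L.-1 | x \in lam].
have Hperm2 : perm_eq lam (L :: P).
  apply: uniq_perm => //.
    rewrite /= filter_uniq ?iota_uniq // andbT mem_filter mem_iota; lia.
  move=> x; rewrite inE mem_filter mem_iota; case Hx: (x \in lam) => /=.
    by move: (Hle _ Hx); lia.
  by rewrite orbF; apply/esym/eqP => Ex; rewrite Ex HL in Hx.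
have HsP : size P = h by move: (perm_size Hperm2); rewrite Hsize /= => -[].
set psi := fun a => if a \in lam then a else L - a.
have Hunr : forall a, 0 < a -> a + a < L -> a \notin lam -> L - a \in lam.
  move=> a a0 aL an; apply/negPn/negP => Ln; move/negP: Hun; apply.
  apply/hasP; exists a; first by rewrite mem_filter an mem_iota /=; lia.
  apply/hasP; exists (L - a); first by rewrite mem_filter Ln mem_iota /=; lia.
  have -> : a + (L - a) = L by lia.
  rewrite HL andbT; apply/eqP; lia.
have Hh : h + h < L by rewrite /h; lia.
set Q := map psi (iota 1 h).
have HQu : uniq Q.
  rewrite map_inj_in_uniq ?iota_uniq // => a b; rewrite !mem_iota /psi.
  by case: (a \in lam); case: (b \in lam); lia.
have HQP : {subset Q <= P}.
  move=> y /mapP[a]; rewrite mem_iota /psi => Ha ->.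
  rewrite mem_filter mem_iota; case Ea: (a \in lam) => /=.
    lia.
  rewrite Hunr ?Ea //=; lia.
have [HsQ HQeq] : (size Q = size P) * (Q =i P).
  by apply: uniq_min_size => //; rewrite HsP size_map size_iota.
have HQP' : perm_eq Q P.
  apply: uniq_perm => //; exact: filter_uniq (iota_uniq _ _).
split => //.
- rewrite sumnE (perm_big _ Hperm2) big_cons.
  by rewrite -(perm_big _ HQP') big_map.
move=> Lev; apply/negP => Hin.
have : L./2 \in P by rewrite mem_filter Hin mem_iota; lia.
rewrite -HQeq => /mapP[a]; rewrite mem_iota /psi.
by case: (a \in lam); lia.
Qed.

Lemma sumn_iota2 a n : 2 * sumn (iota a n) = n * (a + a + n - 1).
Proof.
elim: n a => [|n IH] a //=.
rewrite mulnDr IH; nia.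
Qed.

Lemma last_iota x y n : last x (iota y n.+1) = y + n.
Proof.
elim: n x y => [|n IH] x y /=; first by rewrite addn0.
by change (last y (iota y.+1 n.+1) = y + n.+1); rewrite IH addSnnS.
Qed.

Lemma path_iota x y n : x < y -> path ltn x (iota y n).
Proof. case: n => //= n ->; exact: (iota_ltn_sorted y n.+1). Qed.

Lemma T_eq k : 1 <= k -> T (2 * k - 1) = k * (2 * k - 1).
Proof.
move=> k1; rewrite /T.
have -> : (2 * k - 1) * (2 * k - 1).+1 = 2 * (k * (2 * k - 1)) by nia.
by rewrite mulKn.
Qed.


Definition mu5 k := 1 :: iota 2 (k - 4) ++ iota (k - 1) (k - 3) ++ [:: 2*k-2; 3*k-4; 4*k-6].

Lemma mu5_mem k x : 5 <= k -> (x \in mu5 k) = [|| x == 1, (2 <= x < k - 2), (k - 1 <= x < 2 * k - 4),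
     x == 2*k-2, x == 3*k-4 | x == 4*k-6].
Proof.
move=> k5; rewrite /mu5 inE !mem_cat !mem_iota !inE.
have -> : 2 + (k - 4) = k - 2 by lia.
have -> : k - 1 + (k - 3) = 2 * k - 4 by lia.
by rewrite !orbA.
Qed.

Lemma mu5_last k : largest (mu5 k) = 4 * k - 6.
Proof. by rewrite /largest /mu5 /= !last_cat. Qed.

Lemma mu5_unref k : 5 <= k -> ~~ refinable (mu5 k).
Proof.
move=> k5.
have low : forall x, x \notin mu5 k -> 0 < x -> x = k - 2 \/ 2 * k - 4 <= x.
  by move=> x; rewrite mu5_mem //; lia.
have in1 : forall x, x = 2 * k - 2 \/ x = 3 * k - 4 \/ x = k -> x \in mu5 k.
  by move=> x Hx; rewrite mu5_mem //; lia.
apply/hasPn => a; rewrite mem_filter mem_iota mu5_last => /andP[Hra Ha].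
apply/hasPn => b; rewrite mem_filter mem_iota => /andP[Hrb Hb].
apply/negP => /andP[/eqP Hab Hs].
have Hs' : a + b = 2 * k - 2 \/ a + b = 3 * k - 4 \/ a + b = 4 * k - 6 \/ a + b < 2 * k - 4.
  by move: Hs; rewrite mu5_mem //; lia.
have Ha0 : 0 < a by lia.
have Hb0 : 0 < b by lia.
case: (low a Hra Ha0) => Ea; case: (low b Hrb Hb0) => Eb.
- by apply: Hab; lia.
- have : b \in mu5 k by apply: in1; lia.
  by rewrite (negbTE Hrb).
- have : a \in mu5 k by apply: in1; lia.
  by rewrite (negbTE Hra).
- have [Ea'|Eb'] : a = 2 * k - 2 \/ b = 2 * k - 2 by lia.
    have : a \in mu5 k by apply: in1; lia.
    by rewrite (negbTE Hra).
  have : b \in mu5 k by apply: in1; lia.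
  by rewrite (negbTE Hrb).
Qed.

Lemma mu5_sorted k : 5 <= k -> sorted ltn (mu5 k).
Proof.
move=> k5.
rewrite /mu5 /= cat_path path_iota //=.
have -> : last 1 (iota 2 (k - 4)) = k - 3.
  case E: (k - 4) => [|m]; first by rewrite /=; lia.
  rewrite last_iota; lia.
rewrite cat_path path_iota; last lia.
have -> : k - 3 = (k - 4).+1 by lia.
rewrite last_iota /=; lia.
Qed.

Lemma mu5_pos k : 5 <= k -> all (fun x => 0 < x) (mu5 k).
Proof. move=> k5; apply/allP => x; rewrite /mu5 inE !mem_cat !mem_iota !inE; lia. Qed.

Lemma mu5_sum k : 5 <= k -> sumn (mu5 k) = T (2 * k - 1).
Proof.
move=> k5; rewrite T_eq; last lia.
rewrite /mu5 /= sumn_cat sumn_cat /=.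
have := sumn_iota2 2 (k - 4); have := sumn_iota2 (k - 1) (k - 3).
move: (sumn (iota 2 (k - 4))) (sumn (iota (k - 1) (k - 3))) => X Y.
have [j ->] : exists j, k = j + 5 by exists (k - 5); lia.
have -> : j + 5 - 4 = j + 1 by lia.
have -> : j + 5 - 3 = j + 2 by lia.
have -> : j + 5 - 1 = j + 4 by lia.
have -> : 2 * (j + 5) - 1 = 2 * j + 9 by lia.
have -> : 2 * (j + 5) - 2 = 2 * j + 8 by lia.
have -> : 3 * (j + 5) - 4 = 3 * j + 11 by lia.
have -> : 4 * (j + 5) - 6 = 4 * j + 14 by lia.
have -> : j + 4 + (j + 4) + (j + 2) - 1 = 3 * j + 9 by lia.
have -> : 2 + 2 + (j + 1) - 1 = j + 4 by lia.
nia.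
Qed.

Lemma mu5_size k : 5 <= k -> 2 <= size (mu5 k).
Proof. move=> k5; rewrite /mu5 /= !size_cat !size_iota /=; lia. Qed.

Lemma witness k : 4 <= k ->
  exists mu, unrefinable (T (2 * k - 1)) mu /\ largest mu = 4 * k - 6.
Proof.
move=> k4; case: (ltngtP k 4) => [|k5|E]; first lia; last first.
  by subst k; exists [:: 1; 2; 3; 4; 8; 10]; split; vm_compute.
exists (mu5 k); split; last exact: mu5_last.
rewrite /unrefinable /is_dpart mu5_unref // andbT.
by rewrite mu5_sorted // mu5_pos // mu5_sum // eqxx mu5_size.
Qed.

Lemma L_eq (L : nat) (lam : seq nat) k : 4 <= k -> 4 * k - 6 <= L ->
  k * (2 * k - 1) = L + \sum_(a <- iota 1 ((L.-1)./2)) (if a \in lam then a else L - a) ->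
  L = 4 * k - 6.
Proof.
move=> k4; have [j ->] : exists j, k = j + 4 by exists (k - 4); lia.
have -> : 4 * (j + 4) - 6 = 4 * j + 10 by lia.
have -> : 2 * (j + 4) - 1 = 2 * j + 7 by lia.
move=> HL.
set h := (L.-1)./2.
set D := \sum_(a <- iota 1 h) ((a \notin lam) * (L - 2 * a)).
have -> : \sum_(a <- iota 1 h) (if a \in lam then a else L - a) = sumn (iota 1 h) + D.
  rewrite sumnE /D -big_split /=; rewrite !big_seq; apply: eq_bigr => a.
  rewrite mem_iota /h => Ha; case: (a \in lam) => /=; lia.
have Hhd : h + h < L <= h + h + 2 by lia.
clearbody h.
have HS := sumn_iota2 1 h.
have E1 : 1 + 1 + h - 1 = h + 1 by lia.
rewrite E1 in HS.
move: (sumn (iota 1 h)) HS => S HS.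
case: (ltnP L (4 * j + 11)) => [H6|H5]; first lia.
move=> Hsum; exfalso.
case: (ltnP L (4 * j + 13)) => H3; last first.
  have Hh : 2 * j + 6 <= h by lia.
  have : (2 * j + 6) * (2 * j + 7) <= h * (h + 1).
    apply: leq_mul; lia.
  move=> Hb; nia.
case: (ltnP L (4 * j + 12)) => H4.
-
  have EL : L = 4 * j + 11 by lia.
  have Eh : h = (2 * j + 4).+1 by lia.
  have : D = \sum_(a <- iota 1 (2 * j + 4)) ((a \notin lam) * (L - 2 * a)) + (h \notin lam) * 1.
    rewrite /D Eh -[(2 * j + 4).+1]addn1 (iotaD 1 (2 * j + 4) 1) big_cat [iota (1 + _) 1]/= big_seq1; congr (_ + _).
    have -> : 1 + (2 * j + 4) = 2 * j + 4 + 1 by lia.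
    by congr (_ * _); lia.
  set R := \sum_(a <- _) _ => ED.
  set c := \sum_(a <- iota 1 (2 * j + 4)) (a \notin lam : nat).
  have H3c : 3 * c <= R.
    rewrite /c /R big_distrr /= !big_seq; apply: leq_sum => a; rewrite mem_iota => Ha.
    case: (a \in lam) => /=; lia.
  have HLc : R <= L * c.
    rewrite /c /R big_distrr /= !big_seq; apply: leq_sum => a; rewrite mem_iota => Ha.
    case: (a \in lam) => /=; lia.
  have Hb : (h \notin lam : nat) <= 1 by case: (h \in lam).
  rewrite Eh in HS.
  have HD : D = 2 by nia.
  have c0 : c = 0 by lia.
  move: HLc; rewrite c0 muln0; lia.
-
  have EL : L = 4 * j + 12 by lia.
  have Eh : h = 2 * j + 5 by lia.
  have ED : D = 2 * \sum_(a <- iota 1 h) ((a \notin lam) * (2 * j + 6 - a)).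
    rewrite /D big_distrr /= !big_seq; apply: eq_bigr => a; rewrite mem_iota => Ha.
    case: (a \in lam) => /=; lia.
  rewrite Eh in HS.
  have HD : D = 1 by nia.
  lia.
Qed.

Lemma cnt_notin (s : seq nat) p :
  count (fun x => x \notin s) (iota 0 p) = p - count (fun x => x \in s) (iota 0 p).
Proof.
have E := count_predC (fun x => x \in s) (iota 0 p); rewrite size_iota in E.
have E2 : count (fun m => m \notin s) (iota 0 p) = count (predC (fun x => x \in s)) (iota 0 p)
  by apply: eq_count.
by rewrite E2 -[X in X - _]E addKn.
Qed.

Lemma KN_cell_char lam i c : sorted ltn lam ->
  KN_cell lam i c = [&& 1 <= i <= size lam, 1 <= c &
                        c <= nth 0 lam (size lam - i) - (size lam - i)].
Proof.
move=> Hs.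
have Hu : uniq lam := sorted_uniq ltn_trans ltnn Hs.
set M0 := \max_(g <- lam) g.
have Hmax : forall x, x \in lam -> x < M0.+1 by move=> x /le_bigmax.
set f := fun j => j \notin lam.
have Hst : KN_steps lam = map f (iota 0 M0.+1) by [].
have Hh : KN_height lam = size lam.
  rewrite /KN_height Hst count_map.
  rewrite (eq_count (a2 := fun x => x \in lam)); last by move=> x /=; rewrite /f negbK.
  rewrite count_iota_lt //; rewrite -(count_predT lam); apply: eq_in_count => x /Hmax.
  by [].
rewrite /KN_cell Hh Hst.
case Hi : (1 <= i <= size lam) => //; case Hc : (1 <= c) => //; rewrite !andTb.
set t := size lam.
have Htake : forall p, p <= M0.+1 -> take p (map f (iota 0 M0.+1)) = map f (iota 0 p).
  by move=> p Hp; rewrite -map_take take_iota (minn_idPl Hp).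
have Hneg : forall p, count negb (map f (iota 0 p)) = count (fun x => x < p) lam.
  move=> p; rewrite count_map -count_iota_lt //; apply: eq_count => x /=.
  by rewrite /f negbK.
have Hid : forall p, count id (map f (iota 0 p)) = p - count (fun x => x < p) lam.
  by move=> p; rewrite count_map -count_iota_lt // -cnt_notin.
have Hti : t - i < t by lia.
apply/idP/idP.
- move/hasP => [p]; rewrite mem_iota add0n => Hp.
  rewrite size_map size_iota in Hp.
  rewrite (nth_map 0) ?size_iota // nth_iota // add0n /f negbK Htake; last lia.
  rewrite Hneg Hid => /and3P[Hpl /eqP Hr Hcp].
  have Hidx : index p lam < t by rewrite index_mem.
  have Ep := nth_index 0 Hpl.
  have Hrk := @rank_nth lam _ Hs Hidx; rewrite Ep in Hrk.
  have Ei : index p lam = t - i by rewrite -Hrk.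
  by rewrite -Ei Ep -Hrk.
- move=> Hcl; apply/hasP; exists (nth 0 lam (t - i)).
    rewrite mem_iota add0n size_map size_iota; apply: Hmax; exact: mem_nth.
  have Hin : nth 0 lam (t - i) \in lam by exact: mem_nth.
  have Hlt := Hmax _ Hin.
  rewrite (nth_map 0) ?size_iota // nth_iota // add0n /f negbK Htake; last lia.
  rewrite Hneg Hid Hin (@rank_nth lam _ Hs Hti) eqxx /=; exact: Hcl.
Qed.

Lemma KN_height_size lam : sorted ltn lam -> KN_height lam = size lam.
Proof.
move=> Hs.
have Hu : uniq lam := sorted_uniq ltn_trans ltnn Hs.
set M0 := \max_(g <- lam) g.
have Hmax : forall x, x \in lam -> x < M0.+1 by move=> x /le_bigmax.
rewrite /KN_height /KN_steps count_map.
rewrite (eq_count (a2 := fun x => x \in lam)); last by move=> x /=; rewrite negbK.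
rewrite count_iota_lt //; rewrite -(count_predT lam); apply: eq_in_count => x /Hmax.
by [].
Qed.

Lemma count_iota_mono (P : pred nat) m m' : m <= m' -> count P (iota 0 m) <= count P (iota 0 m').
Proof.
move=> H; rewrite -(subnKC H) iotaD count_cat; exact: leq_addr.
Qed.

Lemma count_iotaS (P : pred nat) m : count P (iota 0 m.+1) = count P (iota 0 m) + P m.
Proof. by rewrite -addn1 iotaD count_cat /= addn0. Qed.

Lemma count_le_iota z t : z <= t -> count (fun i => i <= z) (iota 1 t) = z.
Proof.
move=> H; rewrite -(subnKC H) iotaD count_cat.
rewrite (eq_in_count (a2 := predT)); last by move=> x; rewrite mem_iota /=; lia.
rewrite count_predT size_iota.
rewrite (eq_in_count (a2 := pred0)); last by move=> x; rewrite mem_iota /=; lia.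
by rewrite count_pred0 addn0.
Qed.

Lemma row_lemma (lam : seq nat) (r z i : nat) : sorted ltn lam -> r \notin lam -> size lam = r ->
  z = count (fun x => x \notin lam) (iota 0 r) -> 1 <= i <= r ->
  let j := r - i in let a := nth 0 lam j in
  (i <= z -> z.+1 <= a - j) /\ (z < i -> a - j <= z).
Proof.
move=> Hs Hr Ht Hz Hi j a.
have Hj : j < size lam by rewrite Ht /j; lia.
have Ha : a \in lam by exact: mem_nth.
have Hu : uniq lam := sorted_uniq ltn_trans ltnn Hs.
have Hrk : count (fun x => x \in lam) (iota 0 a) = j.
  by rewrite count_iota_lt // (@rank_nth lam _ Hs Hj).
have Haj : a - j = count (fun x => x \notin lam) (iota 0 a) by rewrite cnt_notin Hrk.
have Hzr := cnt_notin lam r; rewrite -Hz in Hzr.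
have Hcm : count (fun x => x \in lam) (iota 0 r) <= r.
  by apply: leq_trans (count_size _ _) _; rewrite size_iota.
have Hne : a != r by apply/eqP => E; rewrite -E Ha in Hr.
case: (ltngtP r a) => [Hra|Har|E]; last by rewrite E eqxx in Hne.
- have H1 := @count_iota_mono (fun x => x \in lam) _ _ (ltnW Hra).
  have H2 := @count_iota_mono (fun x => x \notin lam) _ _ Hra.
  rewrite count_iotaS Hr -Hz /= in H2.
  rewrite Hrk in H1; rewrite -Haj in H2; have Ej : j = r - i by [].
  move: H1 Hzr Hcm; set cm := count _ (iota 0 r) => H1 Hzr Hcm.
  clearbody j a cm; split => ?; lia.
- have H1 := @count_iota_mono (fun x => x \in lam) _ _ Har.
  rewrite count_iotaS Ha Hrk /= in H1.
  have H2 := @count_iota_mono (fun x => x \notin lam) _ _ (ltnW Har).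
  rewrite -Hz -Haj in H2; have Ej : j = r - i by [].
  move: H1 Hzr Hcm; set cm := count _ (iota 0 r) => H1 Hzr Hcm.
  clearbody j a cm; split => ?; lia.
Qed.

Lemma Senum_idx (lam : seq nat) (z r : nat) : r \notin lam ->
  r < \max_(g <- lam) g -> 0 < r -> S_enum lam z = r ->
  z = count (fun x => x \notin lam) (iota 0 r).
Proof.
move=> Hr HrM r0; rewrite /S_enum.
set B := \max_(g <- lam) g + z + 1.
set s := [seq j <- iota 0 B | j \notin lam].
have HrB : r < B by rewrite /B; lia.
have Es : s = [seq j <- iota 0 r | j \notin lam] ++ r :: [seq j <- iota r.+1 (B - r.+1) | j \notin lam].
  rewrite /s; move: HrB; clearbody B => HrB.
  have [m ->] : exists m, B = r + m.+1 by exists (B - r.+1); lia.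
  have -> : r + m.+1 - r.+1 = m by lia.
  rewrite iotaD filter_cat add0n; congr (_ ++ _).
  by rewrite /= (negbTE Hr).
have Hidx : index r s = count (fun x => x \notin lam) (iota 0 r).
  rewrite Es index_cat mem_filter mem_iota ltnn !andbF /= ?eqxx ?addn0.
  by rewrite size_filter.
have Hu : uniq s by rewrite filter_uniq ?iota_uniq.
case: (ltnP z (size s)) => Hzs Hn.
  by rewrite -Hidx -Hn index_uniq.
by move: Hn; rewrite nth_default //; lia.
Qed.

Theorem lemma3p5 (k : nat) (lam : seq nat) (z : nat) :
  4 <= k ->
  overlineU (T (2 * k - 1)) lam ->
  S_enum lam z = (2 * k - 1) - 2 ->
  [/\ ~~ KN_cell lam z.+1 z.+1,
      KN_col_count lam z.+1 = z &
      KN_diag_count lam = z].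
Proof.
move=> k4 [[Hunr Hmaxl] Hm] Hz.
move: (Hunr); rewrite /unrefinable /is_dpart => /andP[/and4P[Hs Hp /eqP Hsum Hsz] Hnr].
have Hsz0 : 0 < size lam by lia.
have [Hsize Hsumn Hev HL Hle] := @structure lam Hs Hp Hsz0 Hnr Hm.
set L := largest lam in Hsize Hsumn Hev HL Hle.
have [mu [Hmu Hmul]] := @witness k k4.
have HL1 : 4 * k - 6 <= L by rewrite -Hmul; exact: Hmaxl.
have EL : L = 4 * k - 6.
  apply: (@L_eq L lam k k4 HL1).
  by rewrite -T_eq; [rewrite -Hsum Hsumn | lia].
set r := 2 * k - 3.
have Hr : r \notin lam.
  have -> : r = L./2 by rewrite EL /r; lia.
  apply: Hev; rewrite EL.
  have -> : 4 * k - 6 = 2 * (2 * k - 3) by lia.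
  by rewrite oddM.
have Ht : size lam = r by rewrite Hsize EL /r; lia.
have HrM : r < \max_(g <- lam) g.
  have := @le_bigmax lam L HL; rewrite EL /r; lia.
have Hz' : z = count (fun x => x \notin lam) (iota 0 r).
  apply: (@Senum_idx lam z r Hr HrM); first by rewrite /r; lia.
  by rewrite Hz /r; lia.
have Hzt : z <= r.
  by rewrite Hz'; apply: leq_trans (count_size _ _) _; rewrite size_iota.
have Hrow := fun i => @row_lemma lam r z i Hs Hr Ht Hz'.
have Hh := @KN_height_size lam Hs.
split.
- rewrite KN_cell_char // Ht; apply/negP => /and3P[Hi _ Hc].
  have [_ H2] := Hrow z.+1 Hi.
  have := H2 (ltnSn z); lia.
- rewrite /KN_col_count Hh Ht -[in RHS](@count_le_iota z r Hzt).
  apply: eq_in_count => i; rewrite mem_iota => Hi.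
  have Hi' : 1 <= i <= r by lia.
  rewrite KN_cell_char // Ht Hi' /=.
  have [H1 H2] := Hrow i Hi'.
  case: (leqP i z) => Hiz.
    by have := H1 Hiz; lia.
  by have := H2 Hiz; lia.
- rewrite /KN_diag_count Hh Ht -[in RHS](@count_le_iota z r Hzt).
  apply: eq_in_count => i; rewrite mem_iota => Hi.
  have Hi' : 1 <= i <= r by lia.
  rewrite KN_cell_char // Ht Hi' /=.
  have [H1 H2] := Hrow i Hi'.
  case: (leqP i z) => Hiz.
    by have := H1 Hiz; lia.
  by have := H2 Hiz; lia.
Qed.
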